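(* Let $r\in\mathbb{R}$. For all integers $n,m,k\ge 0$ with $n\ge m+k$, \[ \binom{k+m}{m} S_2(n,m+k) = \sum_{n_1=m}^n \sum_{l=0}^m \sum_{j=0}^k \binom{n_1}{l}\binom{n-n_1}{j}\binom{n}{n_1} (-1)^{l+j} r^{l+j} S_{2,r}(n_1-l,m-l)\, S_{2,r}(n-n_1-j,k-j). \]
   Context: $S_2(n,k)$ denotes the Stirling numbers of the second kind, $\frac{1}{k!}(e^t-1)^k = \sum_{n\ge k} S_2(n,k)\frac{t^n}{n!}$. For $r\in\mathbb{R}$ and integer $k\ge 0$, the extended Stirling numbers of the second kind $S_{2,r}(n,k)$ are defined by $\frac{1}{k!}(e^t-1+rt)^k = \sum_{n=k}^\infty S_{2,r}(n,k)\frac{t^n}{n!}$, with $S_{2,r}(a,b)=0$ whenever $a<b$, and $\binom{a}{b}=0$ for $b>a$. *)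

(* Defs.v *)
From HB Require Import structures.
From mathcomp Require Import all_boot all_order all_algebra.
From mathcomp Require Import reals.
Set Implicit Arguments. Unset Strict Implicit. Unset Printing Implicit Defensive.
Import Order.TTheory GRing.Theory Num.Theory.
Local Open Scope ring_scope.

(* Truncation of e^t - 1 to degree N: sum_{i=1}^N t^i / i!.
   Coefficients of t^n for n <= N of any power of (expm1_trunc N + r t)
   coincide with those of the formal power series (e^t - 1 + r t)^k. *)
Definition expm1_trunc (R : fieldType) (N : nat) : {poly R} :=
  \sum_(1 <= i < N.+1) (i`!%:R)^-1 *: 'X^i.

(* Extended Stirling numbers of the second kind:
   (1/k!) (e^t - 1 + r t)^k = sum_n S_{2,r}(n,k) t^n / n!,
   i.e. S_{2,r}(n,k) = n!/k! [t^n] (e^t - 1 + r t)^k. *)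
Definition S2r (R : fieldType) (r : R) (n k : nat) : R :=
  n`!%:R / k`!%:R * ((expm1_trunc R n + r *: 'X) ^+ k)`_n.

(* Stirling numbers of the second kind:
   (1/k!) (e^t - 1)^k = sum_n S_2(n,k) t^n / n!. *)
Definition S2 (R : fieldType) (n k : nat) : R :=
  n`!%:R / k`!%:R * ((expm1_trunc R n) ^+ k)`_n.

(* Main.v *)
Require Import Defs.
From HB Require Import structures.
From mathcomp Require Import all_boot all_order all_algebra.
From mathcomp Require Import reals.
From mathcomp Require Import zify ring lra.
Import Order.TTheory GRing.Theory Num.Theory.
Local Open Scope ring_scope.

Lemma coef_pow_eq (R : fieldType) (p q : {poly R}) a :
  (forall i, (i <= a)%N -> p`_i = q`_i) ->
  forall b i, (i <= a)%N -> (p ^+ b)`_i = (q ^+ b)`_i.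
Proof.
move=> H; elim=> [|b IH] i hi; first by rewrite !expr0.
rewrite !exprS !coefM; apply: eq_bigr => j _.
have hj := ltn_ord j.
rewrite H ?IH //; lia.
Qed.

Lemma coef_pow_low (R : fieldType) (p : {poly R}) :
  p`_0 = 0 -> forall m i, (i < m)%N -> (p ^+ m)`_i = 0.
Proof.
move=> H; elim=> [|m IH] i hi; first by [].
rewrite exprS coefM big1 // => j _.
have hj := ltn_ord j.
case: (posnP j) => [->|jp]; first by rewrite H mul0r.
rewrite IH ?mulr0 //; lia.
Qed.

Lemma coef_expm1 (R : fieldType) N i :
  (expm1_trunc R N)`_i = if (0 < i <= N)%N then (i`!%:R)^-1 else 0.
Proof.
elim: N => [|N IH].
  rewrite /expm1_trunc big_geq // coef0; case: ifP => // /andP[]; lia.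
rewrite /expm1_trunc big_nat_recr //= -/(expm1_trunc R N) coefD IH coefZ coefXn.
have [->|ne] := eqVneq i N.+1.
  by rewrite ltnn andbF leqnn mulr1 add0r.
rewrite mulr0 addr0.
case: ifP => h1; case: ifP => h2 //; exfalso; move: h1 h2 ne; lia.
Qed.

Lemma S2r_eq (R : fieldType) (r : R) N a b : (a <= N)%N ->
  S2r r a b = a`!%:R / b`!%:R * ((expm1_trunc R N + r *: 'X) ^+ b)`_a.
Proof.
move=> haN; rewrite /S2r; congr (_ * _); apply: (@coef_pow_eq _ _ _ a) => // i hi.
rewrite !coefD !coef_expm1 !coefZ; congr (_ + _).
case: ifP => h1; case: ifP => h2 //; exfalso; move: h1 h2; lia.
Qed.

Lemma fact_neq0 (R : numFieldType) n : (n`!%:R : R) != 0.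
Proof. by rewrite pnatr_eq0 -lt0n fact_gt0. Qed.

Lemma Aeq (R : numFieldType) (r : R) N m a : (a <= N)%N ->
  a`!%:R / m`!%:R * ((expm1_trunc R N) ^+ m)`_a =
  \sum_(l < m.+1) 'C(a, l)%:R * (-1) ^+ l * r ^+ l * S2r r (a - l) (m - l).
Proof.
move=> haN.
set P := expm1_trunc R N + r *: 'X.
have -> : expm1_trunc R N = P + (- r) *: 'X by rewrite /P scaleNr addrK.
rewrite exprDn coef_sum mulr_sumr; apply: eq_bigr => l _.
have hl := ltn_ord l; rewrite ltnS in hl.
rewrite (@S2r_eq _ r N); last lia.
rewrite coefMn exprZn -scalerAr coefZ coefMXn.
case: ltnP => hal.
  by rewrite (bin_small hal) /= !(mulr0, mul0r, mul0rn, mulr0n).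
have e1 := bin_fact hal. have e2 := bin_fact hl.
have e1R : ('C(a, l)%:R * (l`!%:R * (a - l)`!%:R) : R) = a`!%:R by rewrite -!natrM e1.
have e2R : ('C(m, l)%:R * (l`!%:R * (m - l)`!%:R) : R) = m`!%:R by rewrite -!natrM e2.
have cn0 : ('C(m, l)%:R : R) != 0 by rewrite pnatr_eq0 -lt0n bin_gt0.
rewrite -e1R -e2R (exprNn r) -(mulr_natr _ ('C(m, l))).
have := fact_neq0 R l; have := fact_neq0 R (m - l); have := fact_neq0 R (a - l).
move=> h1 h2 h3.
field.
by rewrite cn0 h2 h3.
Qed.

Theorem mainTheorem7 (R : realType) (r : R) (n m k : nat) :
  (m + k <= n)%N ->
  ('C(k + m, m))%:R * S2 R n (m + k) =
  \sum_(m <= n1 < n.+1) \sum_(l < m.+1) \sum_(j < k.+1)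
    ('C(n1, l))%:R * ('C(n - n1, j))%:R * ('C(n, n1))%:R
    * (-1) ^+ (l + j) * r ^+ (l + j)
    * S2r r (n1 - l) (m - l) * S2r r (n - n1 - j) (k - j).
Proof.
move=> hmk.
rewrite /S2; set E := expm1_trunc R n.
have E0 : E`_0 = 0 by rewrite /E coef_expm1.
rewrite exprD coefM !mulr_sumr.
rewrite -(big_mkord xpredT (fun i => 'C(k + m, m)%:R * (n`!%:R / (m + k)`!%:R * ((E ^+ m)`_i * (E ^+ k)`_(n - i))))) /=.
rewrite (@big_cat_nat _ _ _ m 0 n.+1) //=; last lia.
rewrite big_nat_cond big1 ?add0r; last first.
  by move=> i /andP[/andP[_ hi] _]; rewrite (@coef_pow_low _ E E0 m i hi) !(mul0r, mulr0).
apply: eq_big_nat => n1 /andP[hm hn].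
have A := @Aeq _ r n m n1 ltac:(lia).
have B := @Aeq _ r n k (n - n1) ltac:(lia).
transitivity ('C(n, n1)%:R *
  (\sum_(l < m.+1) 'C(n1, l)%:R * (-1) ^+ l * r ^+ l * S2r r (n1 - l) (m - l)) *
  (\sum_(j < k.+1) 'C(n - n1, j)%:R * (-1) ^+ j * r ^+ j * S2r r (n - n1 - j) (k - j))); last first.
  rewrite [X in X * _]mulr_sumr mulr_suml; apply: eq_bigr => l _.
  rewrite mulr_sumr; apply: eq_bigr => j _.
  rewrite !exprD; ring.
rewrite -A -B.
have e1 := @bin_fact (k + m) m ltac:(lia).
have e2 := @bin_fact n n1 ltac:(lia).
have e1R : ('C(k + m, m)%:R * (m`!%:R * (k + m - m)`!%:R) : R) = (k + m)`!%:R
  by rewrite -!natrM e1.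
have e2R : ('C(n, n1)%:R * (n1`!%:R * (n - n1)`!%:R) : R) = n`!%:R
  by rewrite -!natrM e2.
rewrite addnK [in RHS](addnC k m) in e1R.
rewrite -e1R -e2R.
have := fact_neq0 R m; have := fact_neq0 R k; have := fact_neq0 R n1;
have := fact_neq0 R (n - n1).
have cn0 : ('C(k + m, m)%:R : R) != 0 by rewrite pnatr_eq0 -lt0n bin_gt0; lia.
move=> h1 h2 h3 h4.
field.
by rewrite cn0 h3 h4.
Qed.
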